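(* If $G$ is a connected graph of order at least $3$ that is not a path, then $\gamma_P(G)\le \frac{1}{2}F_c(G)$, and this bound is sharp (there exist such graphs attaining equality).
   Context: Forcing process: given a set of initially colored vertices, at each step a colored vertex with exactly one non-colored neighbor forces (colors) that neighbor. A set $S\subseteq V(G)$ is a forcing set if iterating this process from $S$ eventually colors all vertices; it is a connected forcing set if moreover the induced subgraph $G[S]$ is connected. $F_c(G)$ is the minimum cardinality of a connected forcing set of $G$. Power domination: for $S\subseteq V$ define $\mathcal{P}_G^0(S)=N[S]$ and $\mathcal{P}_G^{i+1}(S)=\bigcup\{N[v]: v\in \mathcal{P}_G^i(S),\ |N[v]\setminus \mathcal{P}_G^i(S)|\le 1\}$; these stabilize to $\mathcal{P}_G^\infty(S)$, and $S$ is power dominating if $\mathcal{P}_G^\infty(S)=V(G)$. $\gamma_P(G)$ is the minimum cardinality of a power dominating set. *)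

(* Defs.v *)
From mathcomp Require Import all_boot.
From mathcomp Require Import boolp.
Set Implicit Arguments. Unset Strict Implicit. Unset Printing Implicit Defensive.

Section Graphs.
Variable T : finType.
Variable e : rel T.

Definition simple_graph : Prop := symmetric e /\ irreflexive e.

Definition graph_connected : Prop := forall x y : T, connect e x y.

Definition is_path_graph : Prop :=
  exists s : seq T,
    [/\ uniq s, (forall x, x \in s) &
        forall x y, e x y <->
          exists i, i.+1 < size s /\
            ((nth x s i = x /\ nth x s i.+1 = y) \/
             (nth x s i = y /\ nth x s i.+1 = x))].

Definition force_step (B B' : {set T}) : bool :=
  [exists u, exists v,
    [&& u \in B, v \notin B, e u v,
        [forall w, (e u w && (w != v)) ==> (w \in B)] & B' == v |: B]].

Definition forcing_set (S : {set T}) : bool := connect force_step S setT.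

Definition induced_connected (S : {set T}) : bool :=
  [forall x in S, forall y in S,
     connect (fun a b => [&& a \in S, b \in S & e a b]) x y].

Definition connected_forcing_set (S : {set T}) : bool :=
  forcing_set S && induced_connected S.

Definition Fc : nat :=
  \big[minn/#|T|]_(S : {set T} | connected_forcing_set S) #|S|.

Definition cnbhd (v : T) : {set T} := v |: [set w | e v w].
Definition cnbhd_set (S : {set T}) : {set T} := \bigcup_(v in S) cnbhd v.

Definition pd_step (A : {set T}) : {set T} :=
  \bigcup_(v in A | #|cnbhd v :\: A| <= 1) cnbhd v.

Definition P_iter (S : {set T}) (i : nat) : {set T} := iter i pd_step (cnbhd_set S).

Definition power_dominating (S : {set T}) : Prop :=
  exists i, P_iter S i = setT.

Definition gammaP : nat :=
  \big[minn/#|T|]_(S : {set T} | `[< power_dominating S >]) #|S|.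

End Graphs.

(* Main.v *)
Require Import Defs.
From mathcomp Require Import all_boot.
From mathcomp Require Import boolp.
Set Implicit Arguments. Unset Strict Implicit. Unset Printing Implicit Defensive.

Lemma bigmin_le_seq (I : eqType) (r : seq I) (P : pred I) (F : I -> nat) x j :
  j \in r -> P j -> \big[minn/x]_(i <- r | P i) F i <= F j.
Proof.
elim: r => //= a r IH; rewrite inE big_cons => /orP [/eqP <- | jr] Pj.
  by rewrite Pj geq_minl.
case: (P a); last exact: IH.
by rewrite (leq_trans (geq_minr _ _)) //; exact: IH.
Qed.

Lemma bigmin_le (I : finType) (P : pred I) (F : I -> nat) x j :
  P j -> \big[minn/x]_(i | P i) F i <= F j.
Proof. by apply: bigmin_le_seq; rewrite mem_index_enum. Qed.

Section G.
Variable T : finType.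
Variable e : rel T.
Hypothesis Hsym : symmetric e.
Hypothesis Hirr : irreflexive e.

Definition good (A : {set T}) := forall x, x \in A ->
  exists2 w, w \in A & (x \in cnbhd e w) /\ (cnbhd e w \subset A).

Lemma cnbhd_self w : w \in cnbhd e w.
Proof. by rewrite /cnbhd in_setU1 eqxx. Qed.

Lemma good_pd_step A : good (pd_step e A).
Proof.
move=> x /bigcupP [w Hw xw]; exists w; last split => //.
  by apply/bigcupP; exists w => //; apply: cnbhd_self.
by apply/subsetP => y yw; apply/bigcupP; exists w.
Qed.

Lemma good_cnbhd_set D : good (cnbhd_set e D).
Proof.
move=> x /bigcupP [w Hw xw]; exists w; last split => //.
  by apply/bigcupP; exists w => //; apply: cnbhd_self.
by apply/subsetP => y yw; apply/bigcupP; exists w.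
Qed.

Lemma sub_pd_step A : good A -> A \subset pd_step e A.
Proof.
move=> gA; apply/subsetP => x xA; have [w wA [xw sw]] := gA x xA.
apply/bigcupP; exists w => //; rewrite wA /=.
have /eqP -> : cnbhd e w :\: A == set0 by rewrite setD_eq0.
by rewrite cards0.
Qed.

Lemma force_pd (A B B' : {set T}) : good A -> B \subset A -> force_step e B B' ->
  B' \subset pd_step e A.
Proof.
move=> gA sBA /existsP [u /existsP [v /and5P [uB vB euv /forallP hw /eqP ->]]].
have uA : u \in A by apply: (subsetP sBA).
have sN : cnbhd e u \subset pd_step e A.
  apply/subsetP => y yu; apply/bigcupP; exists u => //; rewrite uA /=.
  have : cnbhd e u :\: A \subset [set v].
    apply/subsetP => z; rewrite !inE => /andP [zA].
    case/orP => [/eqP zu | euz]; first by rewrite zu uA in zA.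
    apply/negPn/negP => zv; move: (hw z); rewrite euz zv /= => zB.
    by rewrite (subsetP sBA _ zB) in zA.
  by move/subset_leq_card; rewrite cards1.
apply/subsetP => y; rewrite in_setU1 => /orP [/eqP -> | yB].
  by apply: (subsetP sN); rewrite /cnbhd !inE euv orbT.
by apply: (subsetP (sub_pd_step gA)); apply: (subsetP sBA).
Qed.

Lemma path_pd p : forall A B : {set T}, good A -> B \subset A -> path (force_step e) B p ->
  last B p = setT -> iter (size p) (pd_step e) A = setT.
Proof.
elim: p => [|B' p IH] A B gA sBA /=.
  by move=> _ BT; apply/eqP; rewrite eqEsubset subsetT -BT.
case/andP => fs pp lT; rewrite -iterS iterSr; apply: (IH _ B') => //.
  exact: good_pd_step.
exact: force_pd fs.
Qed.

Lemma forcing_pd (S D : {set T}) : forcing_set e S -> S \subset cnbhd_set e D ->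
  power_dominating e D.
Proof.
move=> /connectP [p pp lT] sSD; exists (size p).
rewrite /P_iter; exact: (path_pd (@good_cnbhd_set D) sSD pp (Logic.eq_sym lT)).
Qed.

Definition Inv (B : {set T}) (s : seq T) :=
  [/\ uniq s, forall x, (x \in B) = (x \in s),
      forall x y, x \in s -> y \in s ->
        e x y = (index y s == (index x s).+1) || (index x s == (index y s).+1)
    & forall x w, x \in s -> (index x s).+1 < size s -> e x w -> w \in s].

Lemma inv_step B B' s : Inv B s -> force_step e B B' -> exists s', Inv B' s'.
Proof.
case=> us Hm Hc Hi /existsP [u /existsP [v /and5P [uB vB euv /forallP hw /eqP ->]]].
have uS : u \in s by rewrite -Hm.
have vS : v \notin s by rewrite -Hm.
have ku : (index u s).+1 = size s.
  have := index_mem u s; rewrite uS => lt.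
  case: (ltngtP (index u s).+1 (size s)) => // [lt2|]; last by rewrite ltnNge lt.
  by have := Hi u v uS lt2 euv; rewrite (negbTE vS).
have uniqu : forall y, y \in s -> (index y s).+1 = size s -> y = u.
  move=> y yS ky; rewrite -(nth_index y yS) -(nth_index y uS).
  by congr nth; apply/eqP; rewrite -eqSS ky ku.
have idx : forall x, x \in s -> index x (rcons s v) = index x s.
  by move=> x xS; rewrite -cats1 index_cat xS.
have idv : index v (rcons s v) = size s.
  by rewrite -cats1 index_cat (negbTE vS) /= eqxx addn0.
have ev : forall y, y \in s -> e v y = ((index y s).+1 == size s).
  move=> y yS; case: (boolP ((index y s).+1 == size s)) => [/eqP k | k].
    by rewrite (uniqu y yS k) Hsym.
  apply/negbTE/negP => evy.
  have lt : (index y s).+1 < size s.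
    by rewrite ltn_neqAle k /= index_mem.
  by have := Hi y v yS lt; rewrite Hsym evy (negbTE vS) => /(_ isT).
exists (rcons s v); split.
- by rewrite rcons_uniq vS us.
- by move=> x; rewrite in_setU1 mem_rcons inE Hm.
- move=> x y; rewrite !mem_rcons !inE.
  case/orP => [/eqP -> | xS]; case/orP => [/eqP -> | yS].
  + by rewrite Hirr idv (ltn_eqF (ltnSn _)).
  + rewrite idv idx // ev //.
    by rewrite (@ltn_eqF _ (size s).+1) // leqW // index_mem.
  + rewrite idv idx // Hsym ev //.
    by rewrite (@ltn_eqF _ (size s).+1) ?orbF 1?eq_sym // leqW // index_mem.
  + by rewrite !idx // Hc.
- move=> x w; rewrite mem_rcons inE size_rcons => /orP [/eqP -> | xS].
    by rewrite idv ltnn.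
  rewrite idx // ltnS leq_eqVlt => /orP [/eqP k | lt] exw.
    move: exw; rewrite (uniqu x xS k) mem_rcons inE.
    case: (boolP (w == v)) => //= wv euw; rewrite -Hm.
    by move: (hw w); rewrite euw wv.
  by rewrite mem_rcons inE (Hi x w xS lt exw) orbT.
Qed.

Lemma inv_path p : forall B s, Inv B s -> path (force_step e) B p ->
  exists s', Inv (last B p) s'.
Proof.
elim: p => [|B' p IH] B s hI /=; first by exists s.
case/andP => fs pp; have [s' hI'] := inv_step hI fs; exact: IH hI' pp.
Qed.

Lemma inv_path_graph s : Inv setT s -> is_path_graph e.
Proof.
case=> us Hm Hc _; have all_s : forall x, x \in s by move=> x; rewrite -Hm inE.
exists s; split => // x y; rewrite Hc //; split.
  case/orP => /eqP k.
    exists (index x s); rewrite -k index_mem all_s; split => //.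
    by left; rewrite !nth_index.
  exists (index y s); rewrite -k index_mem all_s; split => //.
  by right; rewrite !nth_index.
case=> i [lt [[hx hy] | [hx hy]]].
  by rewrite -hx -hy !index_uniq ?eqxx // ltnW.
by rewrite -hx -hy !index_uniq ?eqxx ?orbT // ltnW.
Qed.

End G.

Section G2.
Variable T : finType.
Variable e : rel T.
Hypothesis Hsym : symmetric e.
Hypothesis Hirr : irreflexive e.
Hypothesis Hconn : graph_connected e.
Hypothesis Hcard : 3 <= #|T|.
Hypothesis Hnp : ~ is_path_graph e.

Lemma cfs_card2 (S : {set T}) : connected_forcing_set e S -> 2 <= #|S|.
Proof.
case/andP => /connectP [p pp lT] _; case: (leqP 2 #|S|) => // lt.
have [S0|n0] := eqVneq S set0.
  subst S; case: p pp lT => [_ /= T0| B' p /=].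
    by move: Hcard; rewrite -cardsT T0 cards0.
  by case/andP => /existsP [u /existsP [v /and5P []]]; rewrite inE.
have /cards1P [a Sa] : #|S| == 1.
  by move: lt n0; rewrite -cards_eq0; case: #|S| => [|[|]].
exfalso; apply: Hnp; subst S.
have hI : Inv e [set a] [:: a].
  split => //.
  - by move=> x; rewrite !inE.
  - by move=> x y; rewrite !inE => /eqP -> /eqP ->; rewrite Hirr /= eqxx.
have [s' hI'] := inv_path Hsym Hirr hI pp; rewrite -lT in hI'.
exact: inv_path_graph hI'.
Qed.

Lemma no_iso (S : {set T}) : induced_connected e S -> 2 <= #|S| ->
  forall x, x \in S -> exists2 y, y \in S & e x y.
Proof.
move=> hc c2 x xS.
have /card_gt0P [y yS] : 0 < #|S :\ x|.
  by move: c2; rewrite (cardsD1 x S) xS.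
move: yS; rewrite !inE => /andP [yx yS].
move: hc => /forallP /(_ x) /implyP /(_ xS) /forallP /(_ y) /implyP /(_ yS).
case/connectP => [[|z p] /= pp ly]; first by rewrite ly eqxx in yx.
by case/andP: pp => /and3P [_ zS exz] _; exists z.
Qed.

Definition domb (S D : {set T}) :=
  (D \subset S) && [forall x in S, [exists d in D, (d == x) || e d x]].

Lemma domb_cover (S D : {set T}) : domb S D -> S \subset cnbhd_set e D.
Proof.
case/andP => _ /forallP h; apply/subsetP => x xS.
have /existsP [d /andP [dD hd]] := implyP (h x) xS.
apply/bigcupP; exists d => //; rewrite /cnbhd !inE eq_sym.
by case/orP: hd => ->; rewrite ?orbT.
Qed.

Lemma dom_exists (S : {set T}) : (forall x, x \in S -> exists2 y, y \in S & e x y) ->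
  exists D, domb S D /\ 2 * #|D| <= #|S|.
Proof.
move=> hn.
have [D /minsetP [dD minD]] : {D | minset (domb S) D}.
  apply: ex_minset; exists S; rewrite /domb subxx /=.
  by apply/forallP => x; apply/implyP => xS; apply/existsP; exists x; rewrite xS eqxx.
have sDS : D \subset S by case/andP: dD.
have key : forall d, d \in D -> exists2 y, y \in S :\: D & e d y.
  move=> d dD'; suff: [exists y in S :\: D, e d y] by case/exists_inP => y; exists y.
  have [//|/negP hno] := boolP [exists y in S :\: D, e d y]; exfalso.
  have allD : forall y, y \in S -> e d y -> y \in D.
    move=> y yS edy; apply/negPn/negP => yD; apply: hno.
    by apply/exists_inP; exists y => //; rewrite inE yD.
  have dD2 : domb S (D :\ d).
    rewrite /domb (subset_trans (subsetDl _ _) sDS) /=.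
    apply/forallP => x; apply/implyP => xS.
    case/andP: dD => _ /forallP /(_ x) /implyP /(_ xS) /exists_inP [d' d'D hd'].
    case: (eqVneq d' d) => [e1 | ne].
      subst d'; case/orP: hd' => [/eqP xd | edx].
        subst x; have [y yS edy] := hn d xS.
        apply/exists_inP; exists y; last by rewrite Hsym edy orbT.
        by rewrite !inE allD // andbT; apply/negP => /eqP yd; rewrite yd Hirr in edy.
      apply/exists_inP; exists x; last by rewrite eqxx.
      by rewrite !inE allD // andbT; apply/negP => /eqP xd; rewrite xd Hirr in edx.
    by apply/exists_inP; exists d'; rewrite // !inE ne.
  have := minD _ dD2 (subsetDl _ _) => /setP /(_ d).
  by rewrite !inE eqxx dD'.
have dC : domb S (S :\: D).
  rewrite /domb subsetDl /=; apply/forallP => x; apply/implyP => xS.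
  case: (boolP (x \in D)) => xD.
    have [y yC exy] := key x xD; apply/exists_inP; exists y => //.
    by rewrite Hsym exy orbT.
  by apply/exists_inP; exists x; rewrite ?inE ?xD ?xS ?eqxx.
have hc := cardsID D S; move/setIidPr: sDS => hI; rewrite hI in hc.
case: (leqP #|D| #|S :\: D|) => h.
  by exists D; split => //; rewrite -hc mul2n -addnn leq_add2l.
exists (S :\: D); split => //; rewrite -hc mul2n -addnn leq_add2r ltnW //.
Qed.

Lemma main_bound (S : {set T}) : connected_forcing_set e S -> 2 * gammaP e <= #|S|.
Proof.
move=> hS; have c2 := cfs_card2 hS.
have [D [dD cD]] := dom_exists (no_iso (proj2 (andP hS)) c2).
apply: leq_trans cD; rewrite leq_mul2l /=.
apply: bigmin_le; apply/asboolP.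
exact: forcing_pd (proj1 (andP hS)) (domb_cover dD).
Qed.

Lemma cfsT : connected_forcing_set e setT.
Proof.
rewrite /connected_forcing_set /forcing_set connect0 /=.
apply/forallP => x; apply/implyP => _; apply/forallP => y; apply/implyP => _.
rewrite (@eq_connect _ _ e) //; move=> a b; by rewrite !inE.
Qed.

Lemma Fc_bound : 2 * gammaP e <= Fc e.
Proof.
rewrite /Fc; apply: (big_ind (fun m => 2 * gammaP e <= m)).
- by rewrite -cardsT; apply: main_bound; exact: cfsT.
- by move=> m n h1 h2; rewrite leq_min h1 h2.
- by move=> S; apply: main_bound.
Qed.
End G2.
Definition eK3 : rel 'I_3 := fun i j => i != j.

Lemma K3_sym : symmetric eK3.
Proof. by move=> i j; rewrite /eK3 eq_sym. Qed.
Lemma K3_irr : irreflexive eK3.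
Proof. by move=> i; rewrite /eK3 eqxx. Qed.
Lemma K3_conn : graph_connected eK3.
Proof. by move=> x y; case: (eqVneq x y) => [->|ne]; [exact: connect0 | exact: connect1]. Qed.

Lemma K3_np : ~ is_path_graph eK3.
Proof.
move=> [s [us alls hiff]].
have ss : size s = 3.
  rewrite -(card_uniqP us); transitivity #|'I_3|; last exact: card_ord.
  by apply: eq_card => x; rewrite alls.
set x := nth ord0 s 0; set y := nth ord0 s 2.
have xy : eK3 x y by rewrite /eK3 /x /y nth_uniq ?ss ?us.
have [i [lt h]] := (hiff x y).1 xy.
have lti : i < size s by apply: ltnW.
have lti1 : i.+1 < size s by [].
have lti3 : i < 3 by rewrite -ss.
have lti13 : i.+1 < 3 by rewrite -ss.
rewrite !(set_nth_default ord0) // in h.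
case: h => [[hx hy] | [hx hy]].
  move/eqP: hx; rewrite /x nth_uniq ?ss ?us // => /eqP i0; subst i.
  by move/eqP: hy; rewrite /y nth_uniq ?ss ?us.
by move/eqP: hx; rewrite /y nth_uniq ?ss ?us // => /eqP i2; subst i.
Qed.

Definition o0 : 'I_3 := @Ordinal 3 0 isT.
Definition o1 : 'I_3 := @Ordinal 3 1 isT.
Definition o2 : 'I_3 := @Ordinal 3 2 isT.

Lemma K3_cfs : connected_forcing_set eK3 [set o0; o1].
Proof.
apply/andP; split.
  apply: connect1; apply/existsP; exists o0; apply/existsP; exists o2.
  apply/and5P; split.
  - by rewrite !inE eqxx.
  - by rewrite !inE.
  - by [].
  - by apply/forallP => -[[|[|[|n]]] hn] //=; rewrite !inE.
  - by apply/eqP/setP => -[[|[|[|n]]] hn] //; rewrite !inE.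
apply/forallP => x; apply/implyP => xB; apply/forallP => y; apply/implyP => yB.
case: (eqVneq x y) => [->|ne]; first exact: connect0.
by apply: connect1; rewrite xB yB.
Qed.

Lemma K3_card : 3 <= #|'I_3|.
Proof. by rewrite card_ord. Qed.

Lemma K3_Fc : Fc eK3 = 2.
Proof.
apply/eqP; rewrite eqn_leq; apply/andP; split.
  by have := bigmin_le (fun S : {set 'I_3} => #|S|) #|'I_3| K3_cfs; rewrite cards2.
apply: (big_ind (fun m => 2 <= m)).
- by rewrite card_ord.
- by move=> m n h1 h2; rewrite leq_min h1 h2.
- move=> S; exact: (cfs_card2 K3_sym K3_irr K3_card K3_np).
Qed.

Lemma pd_nonempty (T : finType) (e : rel T) (S : {set T}) (x : T) :
  power_dominating e S -> S != set0.
Proof.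
case=> i hi; apply/negP => /eqP S0; subst S.
have : iter i (pd_step e) (cnbhd_set e set0) = set0.
  elim: i {hi} => [|i IH] /=.
    by apply/setP => y; rewrite inE; apply/bigcupP => -[v]; rewrite inE.
  by rewrite IH; apply/setP => y; rewrite inE; apply/bigcupP => -[v]; rewrite inE.
by rewrite -/(P_iter e set0 i) hi => /setP /(_ x); rewrite !inE.
Qed.

Lemma K3_gammaP : gammaP eK3 = 1.
Proof.
apply/eqP; rewrite eqn_leq; apply/andP; split.
  have pd : power_dominating eK3 [set o0].
    exists 0; apply/setP => x; rewrite in_setT /P_iter /=; apply/bigcupP; exists o0; first by rewrite inE.
    by rewrite /cnbhd !inE /eK3 eq_sym orbN.
  have := @bigmin_le _ (fun S : {set 'I_3} => `[< power_dominating eK3 S >]) (fun S : {set 'I_3} => #|S|) #|'I_3| _ (asboolT pd); by rewrite cards1.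
apply: (big_ind (fun m => 1 <= m)).
- by rewrite card_ord.
- by move=> m n h1 h2; rewrite leq_min h1 h2.
- move=> S /asboolP h; rewrite card_gt0; exact: pd_nonempty o0 h.
Qed.

Theorem proposition2 :
  (forall (T : finType) (e : rel T),
      simple_graph e -> graph_connected e -> 3 <= #|T| -> ~ is_path_graph e ->
      2 * gammaP e <= Fc e)
  /\
  (exists (n : nat) (e : rel 'I_n),
      [/\ simple_graph e, graph_connected e, 3 <= #|'I_n|, ~ is_path_graph e &
          2 * gammaP e = Fc e]).
Proof.
split.
  move=> T e [hs hi] hc h3 hnp; exact: Fc_bound.
exists 3, eK3; split.
- by split; [exact: K3_sym | exact: K3_irr].
- exact: K3_conn.
- exact: K3_card.
- exact: K3_np.
- by rewrite K3_gammaP K3_Fc.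
Qed.
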